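(* Let $n\ge 2$ and let $Q_n$ be the graph defined below. For all $i\neq j$ in $\{1,\dots,n\}$, the graph $\sigma^{ij}_{\bowtie}(Q_n)$ is not a trapezoid graph.
   Context: $Q_n$ has $5n$ nodes $v_1,\dots,v_{5n}$, the edges $\{v_t,v_{t+1}\}$ for $1\le t<5n$ (a path), and additionally the edges $\{v_{5i-3},v_{5i-1}\}$ for each $i\in\{1,\dots,n\}$. For $i\in\{1,\dots,n\}$, $H_i$ is the subgraph with vertices $v_{5i-2},v_{5i-1}$ and the edge between them, and $\sigma_i: V(H_1)\to V(H_i)$ is the isomorphism $\sigma_i(v_3)=v_{5i-2}$, $\sigma_i(v_4)=v_{5i-1}$; $\sigma^{ij}=\sigma_i\circ\sigma_j^{-1}$. Crossing: given a graph $G$ and two independent isomorphic subgraphs $H=(V_1,E_1)$, $H'=(V_2,E_2)$ (disjoint vertex sets, no edges of $G$ between them) with isomorphism $\sigma:V_1\to V_2$, the crossing $\sigma_{\bowtie}(G)$ is obtained from $G$ by replacing every pair of edges $\{u,v\}\in E_1$, $\{\sigma(u),\sigma(v)\}\in E_2$ by the pair $\{u,\sigma(v)\}$, $\{\sigma(u),v\}$. Concretely, $\sigma^{ij}_{\bowtie}(Q_n)$ is obtained from $Q_n$ by removing the edges $\{v_{5i-2},v_{5i-1}\}$ and $\{v_{5j-2},v_{5j-1}\}$ and adding the edges $\{v_{5i-2},v_{5j-1}\}$ and $\{v_{5j-2},v_{5i-1}\}$. A trapezoid graph is the intersection graph of a family of trapezoids each having one side on a fixed top horizontal line and one side on a fixed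 parallel bottom line. *)

(* Defs.v *)
(* Graphs are symmetric irreflexive boolean relations. *)
From HB Require Import structures.
From mathcomp Require Import all_boot all_order all_algebra.
From mathcomp Require Import reals.
Set Implicit Arguments. Unset Strict Implicit. Unset Printing Implicit Defensive.
Import Order.TTheory GRing.Theory Num.Theory.

(* Vertices of Q_n are 0-indexed: the paper's v_t is the natural number t-1,
   and the vertex type is 'I_(5*n). *)

Definition same_pair (x y u v : nat) : bool :=
  ((x == u) && (y == v)) || ((x == v) && (y == u)).

(* Edge relation of Q_n on nat (restricted to 'I_(5n) below):
   path edges {v_t, v_(t+1)} and the chords {v_(5i-3), v_(5i-1)},
   i.e. 0-indexed {5k+1, 5k+3}. *)
Definition Q_edge (x y : nat) : bool :=
  (x.+1 == y) || (y.+1 == x) ||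
  ((x %% 5 == 1) && (y == x + 2)) || ((y %% 5 == 1) && (x == y + 2)).

(* Crossing of two independent single-edge subgraphs H = ({a,b},{ab}) and
   H' = ({a',b'},{a'b'}) along sigma : a |-> a', b |-> b':
   remove {a,b}, {a',b'}; add {a,b'}, {a',b}. *)
Definition cross_rel (e : rel nat) (a b a' b' : nat) : rel nat :=
  fun x y =>
    if same_pair x y a b || same_pair x y a' b' then false
    else if same_pair x y a b' || same_pair x y a' b then true
    else e x y.

(* sigma^{ij}_bowtie(Q_n), with i, j given 0-indexed (paper's i = i0+1):
   H_i has vertices v_(5i-2), v_(5i-1), i.e. 0-indexed 5*i0+2, 5*i0+3. *)
Definition Q_cross_edge (i j : nat) : rel nat :=
  cross_rel Q_edge (5 * i + 2) (5 * i + 3) (5 * j + 2) (5 * j + 3).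

Definition Q_cross (n : nat) (i j : 'I_n) : rel 'I_(5 * n) :=
  fun x y => Q_cross_edge i j (val x) (val y).

(* A trapezoid between the bottom line y = 0 and the top line y = 1,
   with top side [a, b] (a <= b) and bottom side [c, d] (c <= d):
   the convex hull of these two segments. *)
Record trapezoid (R : realType) := Trapezoid {
  top_l : R; top_r : R; bot_l : R; bot_r : R }.

Definition trap_valid (R : realType) (t : trapezoid R) : Prop :=
  (top_l t <= top_r t)%R /\ (bot_l t <= bot_r t)%R.

Definition in_trap (R : realType) (t : trapezoid R) (p : R * R) : Prop :=
  let: (px, py) := p in
  [/\ (0 <= py)%R, (py <= 1)%R,
      ((1 - py) * bot_l t + py * top_l t <= px)%R &
      (px <= (1 - py) * bot_r t + py * top_r t)%R].

Definition traps_meet (R : realType) (t1 t2 : trapezoid R) : Prop :=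
  exists p : R * R, in_trap t1 p /\ in_trap t2 p.

Definition is_trapezoid_graph (R : realType) (T : finType) (e : rel T) : Prop :=
  exists f : T -> trapezoid R,
    (forall x, trap_valid (f x)) /\
    (forall x y, x != y -> (e x y <-> traps_meet (f x) (f y))).

(* Main.v *)
Require Import Defs.
From mathcomp Require Import all_boot all_order all_algebra.
From mathcomp Require Import reals.
From mathcomp Require Import lra zify.
Import Order.TTheory GRing.Theory Num.Theory.

Section Geo.
Local Open Scope ring_scope.
Variable R : realType.

Definition tleft (t1 t2 : trapezoid R) : Prop :=
  top_r t1 < top_l t2 /\ bot_r t1 < bot_l t2.

Lemma tleft_sep (t1 t2 : trapezoid R) : tleft t1 t2 -> ~ traps_meet t1 t2.
Proof.
case=> h1 h2 [[px py] [/= [? ? ? ?] [? ? ? ?]]].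
case: (lerP (bot_l t2 - bot_r t1) (top_l t2 - top_r t1)) => ?; nra.
Qed.

Lemma tleft_trans (t1 t2 t3 : trapezoid R) : trap_valid t2 -> tleft t1 t2 -> tleft t2 t3 -> tleft t1 t3.
Proof. case=> ? ? [? ?] [? ?]; split; lra. Qed.

Lemma top_meet (t1 t2 : trapezoid R) : trap_valid t1 -> trap_valid t2 ->
  top_l t2 <= top_r t1 -> top_l t1 <= top_r t2 -> traps_meet t1 t2.
Proof.
case=> ? ? [? ?] ? ?.
case: (lerP (top_l t1) (top_l t2)) => ?.
- exists (top_l t2, 1); split; split; lra.
- exists (top_l t1, 1); split; split; lra.
Qed.

Lemma bot_meet (t1 t2 : trapezoid R) : trap_valid t1 -> trap_valid t2 ->
  bot_l t2 <= bot_r t1 -> bot_l t1 <= bot_r t2 -> traps_meet t1 t2.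
Proof.
case=> ? ? [? ?] ? ?.
case: (lerP (bot_l t1) (bot_l t2)) => ?.
- exists (bot_l t2, 0); split; split; lra.
- exists (bot_l t1, 0); split; split; lra.
Qed.

Lemma mid_meet (t1 t2 : trapezoid R) : trap_valid t1 -> trap_valid t2 ->
  top_r t1 < top_l t2 -> bot_r t2 < bot_l t1 -> traps_meet t1 t2.
Proof.
case=> ? ? [? ?] ? ?.
set a := bot_r t1 - bot_l t2.
set b := top_l t2 - top_r t1.
have ha : 0 < a by rewrite /a; lra.
have hb : 0 < b by rewrite /b; lra.
have hs : 0 < a + b by lra.
set y := a / (a + b).
have hy : y * (a + b) = a by rewrite /y divfK // gt_eqF.
have y0 : 0 <= y by rewrite /y divr_ge0 // ltW.
have y1 : y <= 1 by nra.
exists ((1 - y) * bot_r t1 + y * top_r t1, y).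
rewrite /a /b in hy.
split; split => //; nra.
Qed.

Lemma tleft_cmp (t1 t2 : trapezoid R) : trap_valid t1 -> trap_valid t2 -> ~ traps_meet t1 t2 ->
  tleft t1 t2 \/ tleft t2 t1.
Proof.
move=> v1 v2 hm.
have sym : traps_meet t2 t1 -> traps_meet t1 t2.
  by case=> p [? ?]; exists p.
case: v1 v2 => [? ?] [? ?].
case: (ltrP (top_r t1) (top_l t2)) => T1;
case: (ltrP (bot_r t1) (bot_l t2)) => B1;
case: (ltrP (top_r t2) (top_l t1)) => T2;
case: (ltrP (bot_r t2) (bot_l t1)) => B2;
  try (by left; split); try (by right; split); exfalso; apply: hm;
  try (by apply: top_meet => //; split);
  try (by apply: bot_meet => //; split);
  try (by apply: mid_meet => //; split);
  try (by apply: sym; apply: mid_meet => //; split);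
  lra.
Qed.

End Geo.

Section Key.
Variables (T : Type) (adj lt : T -> T -> Prop).
Hypotheses (sym : forall {x y}, adj x y -> adj y x)
  (sep : forall {x y}, lt x y -> ~ adj x y)
  (cmp : forall {x y}, ~ adj x y -> lt x y \/ lt y x)
  (tr : forall {x y z}, lt x y -> lt y z -> lt x z).

Lemma half v0 v1 v2 v3 w (g : nat -> T) len :
  adj v0 v1 -> adj v1 v2 -> adj v2 v3 -> adj v0 w ->
  ~ adj v0 v3 -> ~ adj w v2 -> ~ adj w v1 ->
  g 0 = w -> g len = v3 -> (forall k, (k < len)%N -> adj (g k) (g k.+1)) ->
  (forall k, (k <= len)%N -> ~ adj (g k) v1) -> lt v0 v2 -> False.
Proof.
move=> a01 a12 a23 a0w n03 nw2 nw1 g0 gl ga gn l02.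
have l03 : lt v0 v3.
  case: (cmp n03) => [//|l30]; exfalso; exact: (sep (tr l30 l02) (sym a23)).
have lw2 : lt w v2.
  case: (cmp nw2) => [//|l2w]; exfalso; exact: (sep (tr l02 l2w) a0w).
have lw1 : lt w v1.
  case: (cmp nw1) => [//|l1w]; exfalso; exact: (sep (tr l1w lw2) a12).
have walk : forall k, (k <= len)%N -> lt (g k) v1.
  elim=> [|k IH] hk; first by rewrite g0.
  have hk' : (k <= len)%N by apply: ltnW.
  case: (cmp (gn _ hk)) => [//|l1g]; exfalso.
  exact: (sep (tr (IH hk') l1g) (ga _ hk)).
have := walk len (leqnn _); rewrite gl => l31.
exact: (sep (tr l03 l31) a01).
Qed.
End Key.

Lemma key (T : Type) (adj lt : T -> T -> Prop)
  (sym : forall {x y}, adj x y -> adj y x)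
  (sep : forall {x y}, lt x y -> ~ adj x y)
  (cmp : forall {x y}, ~ adj x y -> lt x y \/ lt y x)
  (tr : forall {x y z}, lt x y -> lt y z -> lt x z)
  v0 v1 v2 v3 w (g : nat -> T) len :
  adj v0 v1 -> adj v1 v2 -> adj v2 v3 -> adj v0 w -> ~ adj v0 v2 ->
  ~ adj v0 v3 -> ~ adj w v2 -> ~ adj w v1 ->
  g 0 = w -> g len = v3 -> (forall k, (k < len)%N -> adj (g k) (g k.+1)) ->
  (forall k, (k <= len)%N -> ~ adj (g k) v1) -> False.
Proof.
move=> a01 a12 a23 a0w n02 n03 nw2 nw1 g0 gl ga gn.
case: (cmp _ _ n02) => l.
- exact: (@half T adj lt sym sep cmp tr _ _ _ _ _ _ _ a01 a12 a23 a0w n03 nw2 nw1 g0 gl ga gn l).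
- have sep' : forall x y, (fun a b => lt b a) x y -> ~ adj x y.
    by move=> x y /(sep _ _) h /(sym _ _).
  have cmp' : forall x y, ~ adj x y -> (fun a b => lt b a) x y \/ (fun a b => lt b a) y x.
    by move=> x y /(cmp _ _) [] ?; [right|left].
  have tr' : forall x y z, (fun a b => lt b a) x y -> (fun a b => lt b a) y z -> (fun a b => lt b a) x z.
    by move=> x y z h1 h2; apply: tr _ _ _ h2 h1.
  exact: (@half T adj (fun a b => lt b a) sym sep' cmp' tr' _ _ _ _ _ _ _ a01 a12 a23 a0w n03 nw2 nw1 g0 gl ga gn l).
Qed.

Ltac qdec := rewrite /Q_cross_edge /cross_rel /same_pair /Q_edge;
  repeat (case: eqP => ? /=; try lia).

Lemma main_lt (R : realType) (n i j : nat) (hij : (i < j)%N) (hjn : (j < n)%N) :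
  ~ is_trapezoid_graph R (fun x y : 'I_(5 * n) => Q_cross_edge i j (val x) (val y)).
Proof.
move=> [f [hv he]].
pose adj := fun x y : 'I_(5 * n) => traps_meet (f x) (f y).
pose lt := fun x y : 'I_(5 * n) => @tleft R (f x) (f y).
have h0 : (0 < 5 * n)%N by lia.
pose x0 := Ordinal h0.
pose g := fun t : nat => (insubd x0 t : 'I_(5 * n)).
have gv : forall t, (t < 5 * n)%N -> val (g t) = t.
  by move=> t ht; rewrite /g val_insubd ht.
have adjT : forall t u, (t < 5 * n)%N -> (u < 5 * n)%N -> t != u ->
    Q_cross_edge i j t u = true -> adj (g t) (g u).
  move=> t u ht hu htu hq; apply/he.
    by apply/eqP => /(congr1 val); rewrite !gv //; apply/eqP.
  by rewrite /= !gv.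
have adjF : forall t u, (t < 5 * n)%N -> (u < 5 * n)%N -> t != u ->
    Q_cross_edge i j t u = false -> ~ adj (g t) (g u).
  move=> t u ht hu htu hq /he; rewrite /= !gv // hq => h; have // : false.
  by apply: h; apply/eqP => /(congr1 val); rewrite !gv //; apply/eqP.
have sym : forall x y, adj x y -> adj y x by move=> x y [p [? ?]]; exists p.
have sep : forall x y, lt x y -> ~ adj x y by move=> x y; apply: tleft_sep.
have cmp : forall x y, ~ adj x y -> lt x y \/ lt y x
  by move=> x y h; apply: tleft_cmp => //; apply: hv.
have tr : forall x y z, lt x y -> lt y z -> lt x z
  by move=> x y z; apply: tleft_trans; apply: hv.
apply: (@key _ adj lt sym sep cmp tr (g (5*i+3)) (g (5*i+4)) (g (5*i+5))
  (g (5*i+6)) (g (5*j+2)) (fun k => g (5*j+2-k)) (5*j-5*i-4)).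
- apply: adjT; [lia|lia|apply/eqP; lia|qdec].
- apply: adjT; [lia|lia|apply/eqP; lia|qdec].
- apply: adjT; [lia|lia|apply/eqP; lia|qdec].
- apply: adjT; [lia|lia|apply/eqP; lia|qdec].
- apply: adjF; [lia|lia|apply/eqP; lia|qdec].
- apply: adjF; [lia|lia|apply/eqP; lia|qdec].
- apply: adjF; [lia|lia|apply/eqP; lia|qdec].
- apply: adjF; [lia|lia|apply/eqP; lia|qdec].
- by rewrite subn0.
- by congr g; lia.
- move=> k hk; apply: adjT; [lia|lia|apply/eqP; lia|qdec].
- move=> k hk; apply: adjF; [lia|lia|apply/eqP; lia|qdec].
Qed.

Lemma trap_ext (R : realType) (T : finType) (e e' : rel T) :
  (forall x y, e x y = e' x y) -> is_trapezoid_graph R e -> is_trapezoid_graph R e'.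
Proof.
move=> h [f [hv he]]; exists f; split => // x y hxy; rewrite -h; exact: he.
Qed.

Lemma cross_sym i j x y : Q_cross_edge i j x y = Q_cross_edge j i x y.
Proof. by rewrite /Q_cross_edge /cross_rel orbC [X in if X then true else _]orbC. Qed.

Theorem mainTheorem12 (R : realType) (n : nat) (hn : (2 <= n)%N)
  (i j : 'I_n) (hij : i != j) :
  ~ is_trapezoid_graph R (Q_cross i j).
Proof.
case: (ltngtP i j) => h.
- exact: (@main_lt R n i j h (ltn_ord j)).
- move=> H; apply: (@main_lt R n j i h (ltn_ord i)); apply: trap_ext H => x y.
  by rewrite /Q_cross cross_sym.
- by move: hij; rewrite (val_inj h) eqxx.
Qed.
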